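(* Let $\mathcal{H}=(H,(G_h)_{h\in H})$ be a point-finite, honest graph-decomposition of a graph $G$ into finite connected parts. Then the map $f\mapsto g_f$ from the directions of $G$ to the directions of $H$ is a bijection.
   Context: A graph-decomposition of $G$ is a pair $(H,(G_h)_{h\in H})$ of a graph $H$ and subgraphs $G_h\subseteq G$ such that $G=\bigcup_h G_h$ and, for every vertex $v$ of $G$, $H_v:=H[\{h:v\in G_h\}]$ is connected. It is point-finite if every $H_v$ is finite, and honest if $G_h\cap G_{h'}\ne\emptyset$ for every edge $hh'$ of $H$. A direction of a graph $X$ is a map $f$ assigning to every finite vertex set $Y$ of $X$ a component $f(Y)$ of $X-Y$ such that $f(Y)\supseteq f(Y')$ whenever $Y\subseteq Y'$. For a direction $f$ of $G$, $g_f$ is the direction of $H$ defined as follows: for a finite $Y\subseteq V(H)$ let $X_Y=\bigcup_{h\in Y}V(G_h)$ (finite since parts are finite); then $g_f(Y)$ is the component of $H-Y$ containing $\bigcup_{v\in f(X_Y)}H_v$. *)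

(* Defs.v *)
From Stdlib Require Import List Relations.

Definition finite_set {T : Type} (A : T -> Prop) : Prop :=
  exists l : list T, forall x, A x -> In x l.

Definition simple_graph {T : Type} (adj : T -> T -> Prop) : Prop :=
  (forall x y, adj x y -> adj y x) /\ (forall x, ~ adj x x).

Definition conn_in {T : Type} (R : T -> T -> Prop) (S : T -> Prop) (x y : T) : Prop :=
  S x /\ clos_refl_trans T (fun a b => S a /\ S b /\ R a b) x y.

Definition is_component {T : Type} (adj : T -> T -> Prop) (Y C : T -> Prop) : Prop :=
  exists x, ~ Y x /\ forall y, C y <-> conn_in adj (fun z => ~ Y z) x y.

Definition direction {T : Type} (adj : T -> T -> Prop) (f : (T -> Prop) -> (T -> Prop)) : Prop :=
  (forall Y, finite_set Y -> is_component adj Y (f Y)) /\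
  (forall Y Y', finite_set Y -> finite_set Y' -> (forall x, Y x -> Y' x) ->
     forall x, f Y' x -> f Y x).

(* Directions are functions on finite sets: equal iff they agree on all finite sets. *)
Definition dir_equiv {T : Type} (f g : (T -> Prop) -> (T -> Prop)) : Prop :=
  forall Y, finite_set Y -> forall x, f Y x <-> g Y x.

(* Graph-decomposition (H, (G_h)_h) of G: G_h has vertex set VG h and edge set EG h. *)
Definition graph_decomposition {V I : Type} (adj : V -> V -> Prop) (adjH : I -> I -> Prop)
    (VG : I -> V -> Prop) (EG : I -> V -> V -> Prop) : Prop :=
  (forall h u v, EG h u v -> adj u v /\ VG h u /\ VG h v) /\
  (forall h u v, EG h u v -> EG h v u) /\
  (forall v, exists h, VG h v) /\
  (forall u v, adj u v -> exists h, EG h u v) /\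
  (forall v h h', VG h v -> VG h' v -> conn_in adjH (fun k => VG k v) h h').

Definition point_finite {V I : Type} (VG : I -> V -> Prop) : Prop :=
  forall v, finite_set (fun h => VG h v).

Definition honest {V I : Type} (adjH : I -> I -> Prop) (VG : I -> V -> Prop) : Prop :=
  forall h h', adjH h h' -> exists v, VG h v /\ VG h' v.

Definition finite_part {V I : Type} (VG : I -> V -> Prop) (h : I) : Prop :=
  finite_set (VG h).

Definition connected_part {V I : Type} (VG : I -> V -> Prop) (EG : I -> V -> V -> Prop) (h : I) : Prop :=
  (exists v, VG h v) /\ forall u v, VG h u -> VG h v -> conn_in (EG h) (VG h) u v.

Definition X_of {V I : Type} (VG : I -> V -> Prop) (Y : I -> Prop) : V -> Prop :=
  fun v => exists h, Y h /\ VG h v.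

Definition g_of {V I : Type} (adjH : I -> I -> Prop) (VG : I -> V -> Prop)
    (f : (V -> Prop) -> (V -> Prop)) : (I -> Prop) -> (I -> Prop) :=
  fun Y h => exists C, is_component adjH Y C /\
    (forall v, f (X_of VG Y) v -> forall h', VG h' v -> C h') /\ C h.

(* Main.v *)
Require Import Defs.
From Stdlib Require Import List Relations.

Lemma conn_refl {T} (R : T -> T -> Prop) S x : S x -> conn_in R S x x.
Proof. intros; split; [assumption| apply rt_refl]. Qed.

Lemma conn_trans {T} (R : T -> T -> Prop) S x y z :
  conn_in R S x y -> conn_in R S y z -> conn_in R S x z.
Proof. intros [H1 H2] [_ H3]; split; [assumption| eapply rt_trans; eauto]. Qed.

Lemma conn_end {T} (R : T -> T -> Prop) S x y : conn_in R S x y -> S y.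
Proof.
  intros [Hx Hp]. apply clos_rt_rt1n_iff in Hp. induction Hp; auto.
  destruct H as [_ [H _]]; auto.
Qed.

Lemma conn_sym {T} (R : T -> T -> Prop) S x y :
  (forall a b, R a b -> R b a) -> conn_in R S x y -> conn_in R S y x.
Proof.
  intros Hs Hc. pose proof (conn_end _ _ _ _ Hc) as Hy. destruct Hc as [Hx Hp].
  split; [assumption|]. induction Hp.
  - apply rt_step. destruct H as [? [? ?]]; auto.
  - apply rt_refl.
  - assert (Sy : S y) by (eapply conn_end; split; [exact Hx| exact Hp1]).
    eapply rt_trans; [apply IHHp2|apply IHHp1]; auto.
Qed.

Lemma conn_mono {T} (R R' : T -> T -> Prop) (S S' : T -> Prop) x y :
  (forall a, S a -> S' a) -> (forall a b, S a -> S b -> R a b -> R' a b) ->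
  conn_in R S x y -> conn_in R' S' x y.
Proof.
  intros HS HR [Hx Hp]. split; auto. clear Hx.
  induction Hp.
  - apply rt_step. destruct H as [? [? ?]]; auto.
  - apply rt_refl.
  - eapply rt_trans; eauto.
Qed.

Lemma transfer {A B} (RA : A -> A -> Prop) (SA : A -> Prop) (RB : B -> B -> Prop) SB
  (M : A -> B -> Prop) :
  (forall a, SA a -> exists b, M a b) ->
  (forall a b b', SA a -> M a b -> M a b' -> conn_in RB SB b b') ->
  (forall a a', SA a -> SA a' -> RA a a' -> exists b, M a b /\ M a' b) ->
  forall a a' b b', conn_in RA SA a a' -> M a b -> M a' b' -> conn_in RB SB b b'.
Proof.
  intros Hc Hf He a a' b b' [Ha Hp]. apply clos_rt_rt1n_iff in Hp.
  revert b b' Ha. induction Hp; intros b b' Ha Mb Mb'.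
  - eauto.
  - destruct H as [Sx [Sy Rxy]]. destruct (He _ _ Sx Sy Rxy) as [c [Mc Mc']].
    eapply conn_trans; [eapply Hf; [exact Sx| exact Mb| exact Mc]|].
    apply IHHp; auto; tauto.
Qed.

Lemma comp_self {T} (adj : T -> T -> Prop) Y C x :
  is_component adj Y C -> C x -> ~ Y x.
Proof. intros [w [_ H]] Cx. apply H in Cx. apply (conn_end _ _ _ _ Cx). Qed.

Lemma comp_closed {T} (adj : T -> T -> Prop) Y C a b :
  is_component adj Y C -> C a -> conn_in adj (fun z => ~ Y z) a b -> C b.
Proof. intros [w [_ H]] Ca Hab. apply H. apply H in Ca. eapply conn_trans; eauto. Qed.

Lemma comp_conn {T} (adj : T -> T -> Prop) Y C a b :
  (forall a b, adj a b -> adj b a) ->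
  is_component adj Y C -> C a -> C b -> conn_in adj (fun z => ~ Y z) a b.
Proof.
  intros Hs [w [_ H]] Ca Cb. apply H in Ca. apply H in Cb.
  eapply conn_trans; [apply conn_sym|]; eauto.
Qed.

Lemma comp_eq {T} (adj : T -> T -> Prop) Y C C' a :
  (forall a b, adj a b -> adj b a) ->
  is_component adj Y C -> is_component adj Y C' -> C a -> C' a ->
  forall y, C y <-> C' y.
Proof.
  intros Hs H1 H2 Ca C'a y; split; intro Hy.
  - eapply comp_closed; [exact H2| exact C'a|]. exact (comp_conn adj Y C a y Hs H1 Ca Hy).
  - eapply comp_closed; [exact H1| exact Ca|]. exact (comp_conn adj Y C' a y Hs H2 C'a Hy).
Qed.

Lemma comp_witness {T} (adj : T -> T -> Prop) Y C :
  is_component adj Y C -> exists x, C x.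
Proof. intros [w [Hw H]]. exists w. apply H. apply conn_refl; auto. Qed.

Lemma finite_union_list {A B} (F : A -> B -> Prop) (l : list A) :
  (forall a, finite_set (F a)) ->
  exists L, forall b, (exists a, In a l /\ F a b) -> In b L.
Proof.
  intros HF. induction l as [|a l IH].
  - exists nil. intros b [a [[] _]].
  - destruct (HF a) as [La HLa]. destruct IH as [L HL].
    exists (La ++ L). intros b [a' [[<-|Hin] Fb]]; apply in_or_app; [left|right]; eauto.
Qed.

Lemma finite_union {A B} (F : A -> B -> Prop) (Y : A -> Prop) :
  (forall a, finite_set (F a)) -> finite_set Y ->
  finite_set (fun b => exists a, Y a /\ F a b).
Proof.
  intros HF [l Hl]. destruct (finite_union_list F l HF) as [L HL].
  exists L. intros b [a [Ya Fa]]. apply HL. eauto.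
Qed.

Lemma comp_of {T} (adj : T -> T -> Prop) Y x :
  ~ Y x -> is_component adj Y (conn_in adj (fun z => ~ Y z) x).
Proof. intro n. exists x. split; auto. intro; tauto. Qed.

Lemma g_char V I (adj : V -> V -> Prop) (adjH : I -> I -> Prop)
    (VG : I -> V -> Prop) (EG : I -> V -> V -> Prop)
    (hG : simple_graph adj) (hH : simple_graph adjH)
    (hD : graph_decomposition adj adjH VG EG)
    (hfin : forall h, finite_part VG h) f (hf : direction adj f) Y (hY : finite_set Y) :
 exists v0 h0, f (X_of VG Y) v0 /\ VG h0 v0 /\ ~ Y h0 /\
  (forall v h', f (X_of VG Y) v -> VG h' v -> conn_in adjH (fun z => ~ Y z) h0 h') /\
  (forall h, g_of adjH VG f Y h <-> conn_in adjH (fun z => ~ Y z) h0 h).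
Proof.
  destruct hD as [hsub [hsym [hcov [hedge hHv]]]].
  assert (hX : finite_set (X_of VG Y)) by (apply finite_union; auto).
  destruct hf as [hcomp hmono].
  destruct (hcomp _ hX) as [x0 [nx0 Hx0]].
  assert (fx0 : f (X_of VG Y) x0) by (apply Hx0; apply conn_refl; auto).
  destruct (hcov x0) as [h0 Vh0].
  assert (nY : ~ Y h0) by (intro; apply nx0; exists h0; auto).
  assert (K : forall v h', f (X_of VG Y) v -> VG h' v -> conn_in adjH (fun z => ~ Y z) h0 h').
  { intros v h' fv Vh'.
    apply (transfer adj (fun z => ~ X_of VG Y z) adjH (fun z => ~ Y z) (fun v h => VG h v))
      with (a := x0) (a' := v); auto.
    - intros a b b' na Vb Vb'. eapply conn_mono; [| |apply hHv; eauto].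
      + intros k Vk Yk. apply na. exists k; auto.
      + auto.
    - intros a a' _ _ Ha. destruct (hedge _ _ Ha) as [h Eh].
      destruct (hsub _ _ _ Eh) as [_ [? ?]]. eauto.
    - apply Hx0; auto. }
  exists x0, h0. refine (conj fx0 (conj Vh0 (conj nY (conj K _)))). intro h; split.
  - intros [C [HC [HU Ch]]].
    assert (Ch0 : C h0) by (eapply HU; eauto).
    apply (proj1 (comp_eq adjH Y C (conn_in adjH (fun z => ~ Y z) h0) h0 (proj1 hH)
             HC (comp_of adjH Y h0 nY) Ch0 (conn_refl adjH _ h0 nY) h)); auto.
  - intro Hc. exists (conn_in adjH (fun z => ~ Y z) h0).
    refine (conj (comp_of adjH Y h0 nY) (conj (fun v fv h1 Vh1 => K v h1 fv Vh1) Hc)).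
Qed.

Definition Yof {V I : Type} (VG : I -> V -> Prop) (X : V -> Prop) : I -> Prop :=
  fun h => exists x, X x /\ VG h x.

Definition Fdef {V I : Type} (adj : V -> V -> Prop) (VG : I -> V -> Prop)
  (g : (I -> Prop) -> (I -> Prop)) : (V -> Prop) -> (V -> Prop) :=
  fun X v => exists C, is_component adj X C /\
    (forall h, g (Yof VG X) h -> forall u, VG h u -> C u) /\ C v.

Lemma f_char V I (adj : V -> V -> Prop) (adjH : I -> I -> Prop)
    (VG : I -> V -> Prop) (EG : I -> V -> V -> Prop)
    (hG : simple_graph adj) (hH : simple_graph adjH)
    (hD : graph_decomposition adj adjH VG EG)
    (hpf : point_finite VG) (hhon : honest adjH VG)
    (hconn : forall h, connected_part VG EG h) g (hg : direction adjH g) X (hXf : finite_set X) :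
 exists v0 h0, g (Yof VG X) h0 /\ VG h0 v0 /\ ~ X v0 /\
  (forall h u, g (Yof VG X) h -> VG h u -> conn_in adj (fun z => ~ X z) v0 u) /\
  (forall v, Fdef adj VG g X v <-> conn_in adj (fun z => ~ X z) v0 v).
Proof.
  destruct hD as [hsub [hsym [hcov [hedge hHv]]]].
  assert (hY : finite_set (Yof VG X)) by (apply (finite_union (fun x h => VG h x)); auto).
  destruct hg as [hcomp hmono].
  destruct (hcomp _ hY) as [h0 [nh0 Hh0]].
  assert (gh0 : g (Yof VG X) h0) by (apply Hh0; apply conn_refl; auto).
  destruct (proj1 (hconn h0)) as [v0 Vv0].
  assert (nX : ~ X v0) by (intro; apply nh0; exists v0; auto).
  assert (K : forall h u, g (Yof VG X) h -> VG h u -> conn_in adj (fun z => ~ X z) v0 u).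
  { intros h u gh Vu.
    apply (transfer adjH (fun z => ~ Yof VG X z) adj (fun z => ~ X z) VG)
      with (a := h0) (a' := h); auto.
    - intros a na. exact (proj1 (hconn a)).
    - intros a b b' na Vb Vb'. eapply conn_mono; [| |apply (proj2 (hconn a)); eauto].
      + intros k Vk Xk. apply na. exists k; auto.
      + intros x y _ _ E. exact (proj1 (hsub _ _ _ E)).
    - apply Hh0; auto. }
  exists v0, h0. refine (conj gh0 (conj Vv0 (conj nX (conj K _)))). intro v; split.
  - intros [C [HC [HU Cv]]].
    assert (Cv0 : C v0) by (eapply HU; eauto).
    apply (proj1 (comp_eq adj X C (conn_in adj (fun z => ~ X z) v0) v0 (proj1 hG)
             HC (comp_of adj X v0 nX) Cv0 (conn_refl adj _ v0 nX) v)); auto.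
  - intro Hc. exists (conn_in adj (fun z => ~ X z) v0).
    refine (conj (comp_of adj X v0 nX) (conj (fun h gh u Vu => K h u gh Vu) Hc)).
Qed.

Theorem lemma3p5 (V I : Type) (adj : V -> V -> Prop) (adjH : I -> I -> Prop)
    (VG : I -> V -> Prop) (EG : I -> V -> V -> Prop)
    (hG : simple_graph adj) (hH : simple_graph adjH)
    (hD : graph_decomposition adj adjH VG EG)
    (hpf : point_finite VG) (hhon : honest adjH VG)
    (hfin : forall h, finite_part VG h) (hconn : forall h, connected_part VG EG h) :
  (forall f, direction adj f -> direction adjH (g_of adjH VG f)) /\
  (forall f f', direction adj f -> direction adj f' ->
     dir_equiv (g_of adjH VG f) (g_of adjH VG f') -> dir_equiv f f') /\
  (forall g, direction adjH g ->
     exists f, direction adj f /\ dir_equiv (g_of adjH VG f) g).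
Proof.
  assert (hD' := hD).
  destruct hD' as [hsub [hsym [hcov [hedge hHv]]]].
  assert (P1 : forall f, direction adj f -> direction adjH (g_of adjH VG f)).
  { intros f hf. split.
    - intros Y hY.
      destruct (g_char V I adj adjH VG EG hG hH hD hfin f hf Y hY)
        as [v0 [h0 [fv0 [Vh0 [nY [K Hiff]]]]]].
      exists h0. split; auto.
    - intros Y Y' hY hY' sub h gh.
      destruct (g_char V I adj adjH VG EG hG hH hD hfin f hf Y hY)
        as [v0 [h0 [fv0 [Vh0 [nY [K Hiff]]]]]].
      destruct (g_char V I adj adjH VG EG hG hH hD hfin f hf Y' hY')
        as [v1 [h1 [fv1 [Vh1 [nY1 [K1 Hiff1]]]]]].
      apply Hiff. apply Hiff1 in gh.
      assert (fv1' : f (X_of VG Y) v1).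
      { apply (proj2 hf) with (Y' := X_of VG Y'); auto.
        - apply finite_union; auto.
        - apply finite_union; auto.
        - intros x [k [Yk Vk]]. exists k; auto. }
      eapply conn_trans; [exact (K v1 h1 fv1' Vh1)|].
      eapply conn_mono; [| |exact gh]; auto. }
  split; [exact P1|split].
  -
    assert (Half : forall f f', direction adj f -> direction adj f' ->
       dir_equiv (g_of adjH VG f) (g_of adjH VG f') ->
       forall X, finite_set X -> forall v, f X v -> f' X v).
    { intros f f' hf hf' heq X hX v fv.
      set (Y := Yof VG X).
      assert (hY : finite_set Y) by (apply (finite_union (fun x h => VG h x)); auto).
      destruct (g_char V I adj adjH VG EG hG hH hD hfin f hf Y hY)
        as [v0 [h0 [fv0 [Vh0 [nY [K Hiff]]]]]].
      destruct (g_char V I adj adjH VG EG hG hH hD hfin f' hf' Y hY)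
        as [v1 [h1 [fv1 [Vh1 [nY1 [K1 Hiff1]]]]]].
      assert (g1 : g_of adjH VG f Y h1).
      { apply (heq Y hY). apply Hiff1. apply conn_refl; auto. }
      apply Hiff in g1.
      assert (sub : forall x, X x -> X_of VG Y x).
      { intros x Xx. destruct (hcov x) as [k Vk]. exists k. split; auto. exists x; auto. }
      assert (hXY : finite_set (X_of VG Y)) by (apply finite_union; auto).
      assert (fv0' : f X v0) by (apply (proj2 hf) with (Y' := X_of VG Y); auto).
      assert (fv1' : f' X v1) by (apply (proj2 hf') with (Y' := X_of VG Y); auto).
      assert (C01 : conn_in adj (fun z => ~ X z) v0 v1).
      { apply (transfer adjH (fun z => ~ Y z) adj (fun z => ~ X z) VG)
          with (a := h0) (a' := h1); auto.
        - intros a na. exact (proj1 (hconn a)).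
        - intros a b b' na Vb Vb'. eapply conn_mono; [| |apply (proj2 (hconn a)); eauto].
          + intros k Vk Xk. apply na. exists k; auto.
          + intros x y _ _ E. exact (proj1 (hsub _ _ _ E)).
        }
      pose proof (proj1 hf X hX) as CX. pose proof (proj1 hf' X hX) as CX'.
      assert (f'v0 : f' X v0).
      { eapply comp_closed; [exact CX'| exact fv1'|]. apply conn_sym; [exact (proj1 hG)|exact C01]. }
      exact (proj1 (comp_eq adj X (f X) (f' X) v0 (proj1 hG) CX CX' fv0' f'v0 v) fv). }
    intros f f' hf hf' heq X hX v. split.
    + apply Half; auto.
    + apply Half; auto. intros Y hY x. symmetry. apply heq; auto.
  -
    intros g hg. set (F := Fdef adj VG g).
    assert (hF : direction adj F).
    { split.
      - intros X hX.
        destruct (f_char V I adj adjH VG EG hG hH hD hpf hhon hconn g hg X hX)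
          as [v0 [h0 [gh0 [Vv0 [nX [K Hiff]]]]]].
        exists v0. split; auto.
      - intros X X' hX hX' sub v Fv.
        destruct (f_char V I adj adjH VG EG hG hH hD hpf hhon hconn g hg X hX)
          as [v0 [h0 [gh0 [Vv0 [nX [K Hiff]]]]]].
        destruct (f_char V I adj adjH VG EG hG hH hD hpf hhon hconn g hg X' hX')
          as [v1 [h1 [gh1 [Vv1 [nX1 [K1 Hiff1]]]]]].
        apply Hiff. apply Hiff1 in Fv.
        assert (gh1' : g (Yof VG X) h1).
        { apply (proj2 hg) with (Y' := Yof VG X'); auto.
          - apply (finite_union (fun x h => VG h x)); auto.
          - apply (finite_union (fun x h => VG h x)); auto.
          - intros k [x [Xx Vx]]. exists x; auto. }
        eapply conn_trans; [exact (K h1 v1 gh1' Vv1)|].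
        eapply conn_mono; [| |exact Fv]; auto. }
    exists F. split; [exact hF|].
    intros Y hY h.
    set (XY := X_of VG Y).
    assert (hXY : finite_set XY) by (apply finite_union; auto).
    destruct (f_char V I adj adjH VG EG hG hH hD hpf hhon hconn g hg XY hXY)
      as [v1 [h1 [gh1 [Vv1 [nX1 [K1 Hiff1]]]]]].
    destruct (g_char V I adj adjH VG EG hG hH hD hfin F hF Y hY)
      as [v0 [h0 [fv0 [Vh0 [nY [K Hiff]]]]]].
    assert (subY : forall k, Y k -> Yof VG XY k).
    { intros k Yk. destruct (proj1 (hconn k)) as [u Vu]. exists u. split; auto.
      exists k; auto. }
    assert (gY1 : g Y h1) by (apply (proj2 hg) with (Y' := Yof VG XY); auto;
                              apply (finite_union (fun x h => VG h x)); auto).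
    assert (FY1 : F XY v1) by (apply Hiff1; apply conn_refl; auto).
    assert (gF1 : g_of adjH VG F Y h1) by (apply Hiff; exact (K v1 h1 FY1 Vv1)).
    exact (comp_eq adjH Y _ _ h1 (proj1 hH) (proj1 (P1 F hF) Y hY) (proj1 hg Y hY) gF1 gY1 h).
Qed.
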